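(* Let $\pi,\rho$ be probability distributions on $\Sigma^n=\{0,1\}^n$ with fidelity $F(\pi,\rho)=\sum_{x}\sqrt{\pi_x\rho_x}\ge1-\delta$, and let $t>4$. Let $M_t(\pi,\rho)=\{x\in\Sigma^n:\pi_x>0,\ \rho_x>0,\ t^{-1}\le\pi_x/\rho_x\le t\}$ be the set of $t$-balanced strings. Then $$\sum_{x\in M_t(\pi,\rho)}\pi_x\ge1-\frac{2\delta}{1-2t^{-1/2}}.$$ *)

(* Defs.v *)
From mathcomp Require Import all_boot all_order all_algebra.
Set Implicit Arguments. Unset Strict Implicit. Unset Printing Implicit Defensive.
Import Order.TTheory GRing.Theory Num.Theory.
Local Open Scope ring_scope.

Definition is_distr (R : realFieldType) (T : finType) (p : T -> R) : Prop :=
  (forall x, 0 <= p x) /\ \sum_(x : T) p x = 1.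

Definition fidelity (R : rcfType) (T : finType) (p q : T -> R) : R :=
  \sum_(x : T) Num.sqrt (p x * q x).

Definition balanced_set (R : realFieldType) (T : finType) (t : R) (p q : T -> R)
  : {set T} :=
  [set x | [&& 0 < p x, 0 < q x, t^-1 <= p x / q x & p x / q x <= t]].

(* Main.v *)
Require Import Defs.
From mathcomp Require Import all_boot all_order all_algebra.
From mathcomp Require Import ring lra.
Import Order.TTheory GRing.Theory Num.Theory.
Local Open Scope ring_scope.

Lemma key (R : rcfType) (p q t : R) : 0 <= p -> 0 <= q -> 4 < t ->
  ~~ [&& 0 < p, 0 < q, t^-1 <= p / q & p / q <= t] ->
  p * (1 - 2 * (Num.sqrt t)^-1) <= p + q - 2 * Num.sqrt (p * q).
Proof.
move=> p0 q0 t4 hn.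
have s2 : 2 < Num.sqrt t.
  have h := sqr_sqrtr (ltW (lt_trans (ltr0n R 4) t4)).
  have h0 := sqrtr_ge0 t.
  move: h h0; set s := Num.sqrt t; nra.
set s := Num.sqrt t in s2 *.
have ts : t = s ^+ 2 by rewrite sqr_sqrtr //; lra.
have ha := sqr_sqrtr p0; have hb := sqr_sqrtr q0.
rewrite sqrtrM //.
set a := Num.sqrt p in ha *; set b := Num.sqrt q in hb *.
have a0 : 0 <= a by rewrite sqrtr_ge0.
have b0 : 0 <= b by rewrite sqrtr_ge0.
have sp : 0 < s by lra.
rewrite -ha -hb.
suff : a ^+ 2 * (s - 2) <= s * (a ^+ 2 + b ^+ 2 - 2 * (a * b)).
  move=> h.
  have -> : a ^+ 2 * (1 - 2 * s^-1) = (a ^+ 2 * (s - 2)) / s.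
    by field; rewrite gt_eqF.
  by rewrite ler_pdivrMr // [X in _ <= X]mulrC.
have [pz|pp] := eqVneq p 0.
  have az : a = 0 by rewrite /a pz sqrtr0.
  rewrite az; nra.
have [qz|qq] := eqVneq q 0.
  have bz : b = 0 by rewrite /b qz sqrtr0.
  rewrite bz; nra.
have pp' : 0 < p by rewrite lt0r pp.
have qq' : 0 < q by rewrite lt0r qq.
rewrite pp' qq' /= in hn.
case/nandP: hn; rewrite -ltNge.
  rewrite ltr_pdivrMr // => h.
  have h1 : p * t < q.
    by rewrite -ltr_pdivlMr; [rewrite mulrC | lra].
  rewrite ts -ha -hb in h1.
  have h2 : s * a < b.
    rewrite ltNge; apply/negP => hc.
    have : b ^+ 2 <= (s * a) ^+ 2 by rewrite ler_pXn2r ?nnegrE //; nra.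
    nra.
  nra.
rewrite ltr_pdivlMr // => h.
rewrite ts -ha -hb in h.
have h2 : s * b < a.
  rewrite ltNge; apply/negP => hc.
  have : a ^+ 2 <= (s * b) ^+ 2 by rewrite ler_pXn2r ?nnegrE //; nra.
  nra.
nra.
Qed.

Theorem lemma5p4 (R : rcfType) (n : nat) (pi rho : n.-tuple bool -> R)
    (delta t : R) :
  is_distr pi -> is_distr rho ->
  1 - delta <= fidelity pi rho ->
  4 < t ->
  1 - (2 * delta) / (1 - 2 * (Num.sqrt t)^-1)
    <= \sum_(x in balanced_set t pi rho) pi x.
Proof.
move=> [p0 p1] [q0 q1] hF t4.
have s2 : 2 < Num.sqrt t.
  have h := sqr_sqrtr (ltW (lt_trans (ltr0n R 4) t4)).
  have h0 := sqrtr_ge0 t.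
  move: h h0; set s := Num.sqrt t; nra.
set u := 1 - 2 * (Num.sqrt t)^-1.
have up : 0 < u.
  rewrite /u subr_gt0 -ltr_pdivlMr ?invr_gt0; last lra.
  rewrite invrK; lra.
have hsum : \sum_(x | x \notin balanced_set t pi rho) pi x * u <=
            \sum_x (pi x + rho x - 2 * Num.sqrt (pi x * rho x)).
  rewrite [X in _ <= X](bigID (fun x => x \in balanced_set t pi rho)) /=.
  rewrite -[X in X <= _]add0r lerD //.
    apply: sumr_ge0 => x _.
    rewrite sqrtrM // -{1}(sqr_sqrtr (p0 x)) -{1}(sqr_sqrtr (q0 x)).
    set a := Num.sqrt (pi x); set b := Num.sqrt (rho x).
    have := sqr_ge0 (a - b); lra.
  apply: ler_sum => x; rewrite inE => hx.
  exact: key.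
have e : \sum_x (pi x + rho x - 2 * Num.sqrt (pi x * rho x)) =
         2 - 2 * fidelity pi rho.
  rewrite /fidelity !big_split /= p1 q1 sumrN -mulr_sumr; ring.
rewrite e -mulr_suml in hsum.
have : \sum_x pi x = 1 by [].
rewrite (bigID (fun x => x \in balanced_set t pi rho)) /= => hs.
have hle : \sum_(x | x \notin balanced_set t pi rho) pi x <= 2 * delta / u.
  by rewrite ler_pdivlMr //; lra.
lra.
Qed.
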